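(* In $\mathsf{FOJT45}$: let $\mathcal{CS}$ be an axiomatically appropriate constant specification and $y$ an individual variable. For every finite set $X$ of individual variables with $y\notin X$, every formula $\varphi(y)$ and every justification term $t$, there is a justification term $\mathsf b(t)$ (built from $t$ using the operations of FOJT45) such that $\vdash_{\mathcal{CS}}\forall y\, t{:}_{Xy}\varphi(y)\to\mathsf b(t){:}_X\forall y\varphi(y)$.
   Context: Syntax of FOJT45: individual variables, predicate symbols, primitive connectives $\to,\bot,\forall$; justification variables $p_i$, constants $c_i$; terms $t::=p_i\mid c\mid (t\cdot t)\mid(t+t)\mid !t\mid ?t\mid\mathsf{gen}_x(t)$ (no primitive $\mathsf b$); formulas $Px_1\dots x_n\mid\bot\mid\varphi\to\varphi\mid\forall x\varphi\mid t{:}_X\varphi$ with $X$ a finite set of individual variables; free variables of $t{:}_X\psi$ are exactly those in $X$. $Xy$ denotes $X\cup\{y\}$ with $y\notin X$. Axioms of FOJT45: A1 classical first-order axioms; A2 $t{:}_{Xy}\varphi\to t{:}_X\varphi$ if $y$ not free in $\varphi$; A3 $t{:}_X\varphi\to t{:}_{Xy}\varphi$; B1 $t{:}_X\varphi\to\varphi$; B2 $t{:}_X(\varphi\to\psi)\to(s{:}_X\varphi\to[t\cdot s]{:}_X\psi)$; B3 $t{:}_X\varphi\to[t+s]{:}_X\varphi$, $s{:}_X\varphi\to[t+s]{:}_X\varphi$; B4 $t{:}_X\varphi\to!t{:}_Xt{:}_X\varphi$; B5 $t{:}_X\varphi\to\mathsf{gen}_x(t){:}_X\forall x\varphi$ if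 $x\notin X$; B6 $\neg t{:}_X\varphi\to ?t{:}_X\neg t{:}_X\varphi$; rules modus ponens and generalization. A constant specification is a set of $c{:}\psi$ with $\psi$ an axiom; axiomatically appropriate if each axiom has some constant; $\vdash_{\mathcal{CS}}$ is provability with $\mathcal{CS}$ added as axioms. *)

(* Defs.v *)
From HB Require Import structures.
From mathcomp Require Import all_boot.
Set Implicit Arguments. Unset Strict Implicit. Unset Printing Implicit Defensive.

(* Individual variables are natural numbers.
   Finite sets of individual variables: strictly increasing lists
   (a canonical representation, so Leibniz equality = set equality). *)
Record vset := VSet { vs : seq nat; vs_sorted : sorted ltn vs }.

Lemma sorted_vnorm (s : seq nat) : sorted ltn (sort leq (undup s)).
Proof.
rewrite ltn_sorted_uniq_leq sort_uniq undup_uniq /=.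
exact: (sort_sorted leq_total).
Qed.

Definition vnorm (s : seq nat) : vset := VSet (sorted_vnorm s).
Definition vempty : vset := vnorm [::].
Definition vadd (y : nat) (X : vset) : vset := vnorm (y :: vs X).
Definition vreplace (x z : nat) (X : vset) : vset :=
  vnorm (map (fun v => if v == x then z else v) (vs X)).

Inductive jterm : Type :=
| JVar of nat
| JConst of nat
| JApp of jterm & jterm
| JSum of jterm & jterm
| JBang of jterm
| JQue of jterm
| JGen of nat & jterm.

Inductive formula : Type :=
| FPred of nat & seq nat
| FBot
| FImp of formula & formula
| FAll of nat & formula
| FJust of jterm & vset & formula.

Definition FNeg (f : formula) : formula := FImp f FBot.

(* x is free in f; the free variables of t:_X ψ are exactly those of X *)
Fixpoint free (x : nat) (f : formula) : bool :=
  match f with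
  | FPred _ xs => x \in xs
  | FBot => false
  | FImp a b => free x a || free x b
  | FAll w a => (x != w) && free x a
  | FJust _ X _ => x \in vs X
  end.

Fixpoint subst (x z : nat) (f : formula) : formula :=
  match f with
  | FPred P xs => FPred P (map (fun v => if v == x then z else v) xs)
  | FBot => FBot
  | FImp a b => FImp (subst x z a) (subst x z b)
  | FAll w a => if w == x then FAll w a else FAll w (subst x z a)
  | FJust t X a =>
      if x \in vs X then FJust t (vreplace x z X) (subst x z a) else f
  end.

Fixpoint free_for (z x : nat) (f : formula) : bool :=
  match f with
  | FPred _ _ => true
  | FBot => true
  | FImp a b => free_for z x a && free_for z x b
  | FAll w a => ~~ free x (FAll w a) || ((w != z) && free_for z x a)
  | FJust _ X a => (x \notin vs X) || free_for z x a
  end.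

Inductive IsAxiom : formula -> Prop :=
| AxK a b : IsAxiom (FImp a (FImp b a))
| AxS a b c : IsAxiom (FImp (FImp a (FImp b c)) (FImp (FImp a b) (FImp a c)))
| AxDN a : IsAxiom (FImp (FNeg (FNeg a)) a)
| AxInst x z a : free_for z x a -> IsAxiom (FImp (FAll x a) (subst x z a))
| AxAllImp x a b : ~~ free x a ->
    IsAxiom (FImp (FAll x (FImp a b)) (FImp a (FAll x b)))
| AxA2 t X y a : y \notin vs X -> ~~ free y a ->
    IsAxiom (FImp (FJust t (vadd y X) a) (FJust t X a))
| AxA3 t X y a : y \notin vs X ->
    IsAxiom (FImp (FJust t X a) (FJust t (vadd y X) a))
| AxB1 t X a : IsAxiom (FImp (FJust t X a) a)
| AxB2 t s X a b :
    IsAxiom (FImp (FJust t X (FImp a b)) (FImp (FJust s X a) (FJust (JApp t s) X b)))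
| AxB3l t s X a : IsAxiom (FImp (FJust t X a) (FJust (JSum t s) X a))
| AxB3r t s X a : IsAxiom (FImp (FJust s X a) (FJust (JSum t s) X a))
| AxB4 t X a : IsAxiom (FImp (FJust t X a) (FJust (JBang t) X (FJust t X a)))
| AxB5 t X x a : x \notin vs X ->
    IsAxiom (FImp (FJust t X a) (FJust (JGen x t) X (FAll x a)))
| AxB6 t X a :
    IsAxiom (FImp (FNeg (FJust t X a)) (FJust (JQue t) X (FNeg (FJust t X a)))).

(* A constant specification: CS c ψ means  c:ψ ∈ CS  (with c:ψ read as c:_∅ ψ);
   every member must have ψ an axiom. *)
Definition const_spec (CS : nat -> formula -> Prop) : Prop :=
  forall c f, CS c f -> IsAxiom f.

Definition axiomatically_appropriate (CS : nat -> formula -> Prop) : Prop :=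
  forall f, IsAxiom f -> exists c, CS c f.

Inductive prv (CS : nat -> formula -> Prop) : formula -> Prop :=
| PAx f : IsAxiom f -> prv CS f
| PCS c f : CS c f -> prv CS (FJust (JConst c) vempty f)
| PMP a b : prv CS (FImp a b) -> prv CS a -> prv CS b
| PGen x a : prv CS a -> prv CS (FAll x a).

(* s occurs in t (t is built from s using term operations) *)
Fixpoint jsub (s t : jterm) : Prop :=
  s = t \/
  match t with
  | JApp a b | JSum a b => jsub s a \/ jsub s b
  | JBang a | JQue a | JGen _ a => jsub s a
  | _ => False
  end.

(* Main.v *)
Require Import Defs.
From mathcomp Require Import all_boot.

Set Implicit Arguments.

Lemma vset_eq X1 X2 : vs X1 =i vs X2 -> X1 = X2.
Proof.
case: X1 X2 => s1 h1 [s2 h2] /= e.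
have es : s1 = s2 by apply: (irr_sorted_eq ltn_trans ltnn).
subst; congr VSet; apply: bool_irrelevance.
Qed.

Lemma vnorm_vs X : vnorm (vs X) = X.
Proof. by apply: vset_eq => z /=; rewrite mem_sort mem_undup. Qed.

Lemma subst_id x f : subst x x f = f.
Proof.
elim: f => //=.
- move=> p xs; congr FPred; rewrite -[RHS]map_id; apply: eq_map => v; by case: eqP => // ->.
- by move=> a -> b ->.
- by move=> w a ->; case: ifP.
- move=> t X a ->; case: ifP => // _; congr FJust.
  rewrite /vreplace -[RHS]vnorm_vs; congr vnorm.
  rewrite -[RHS]map_id; apply: eq_map => v; by case: eqP => // ->.
Qed.

Lemma free_for_id x f : free_for x x f.
Proof.
elim: f => //=.
- by move=> a -> b ->.
- by move=> w a ->; case: (eqVneq x w) => _ /=; rewrite ?orbT.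
- by move=> t X a ->; rewrite orbT.
Qed.
Section S.
Variable CS : nat -> formula -> Prop.
Local Notation P := (prv CS).

Lemma mp a b : P (FImp a b) -> P a -> P b.
Proof. exact: PMP. Qed.

Lemma ax f : IsAxiom f -> P f.
Proof. exact: PAx. Qed.

Lemma imp_trans a b c : P (FImp a b) -> P (FImp b c) -> P (FImp a c).
Proof.
move=> hab hbc.
exact: mp (mp (ax (AxS a b c)) (mp (ax (AxK _ _)) hbc)) hab.
Qed.

Lemma imp_swap a b c : P (FImp a (FImp b c)) -> P (FImp b (FImp a c)).
Proof.
move=> h.
apply: imp_trans (ax (AxK b a)) _.
exact: mp (ax (AxS a b c)) h.
Qed.

Lemma imp_pre a b c : P (FImp a b) -> P (FImp (FImp b c) (FImp a c)).
Proof.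
move=> hab.
have h : P (FImp (FImp b c) (FImp (FImp a b) (FImp a c))).
  exact: imp_trans (ax (AxK (FImp b c) a)) (ax (AxS a b c)).
exact: mp (imp_swap h) hab.
Qed.

Lemma contra a b : P (FImp a b) -> P (FImp (FNeg b) (FNeg a)).
Proof. exact: imp_pre. Qed.

Lemma vempty_nil : vs vempty = [::].
Proof. by []. Qed.

Lemma lift_empty f : axiomatically_appropriate CS -> P f -> exists q, P (FJust q vempty f).
Proof.
move=> app; elim=> {f}.
- move=> f /app [c hc]; exists (JConst c); exact: PCS.
- move=> c f hc; exists (JBang (JConst c)); apply: mp (ax (AxB4 _ _ _)) (PCS hc).
- move=> a b _ [q1 h1] _ [q2 h2]; exists (JApp q1 q2).
  exact: mp (mp (ax (AxB2 _ _ _ _ _)) h1) h2.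
- move=> x a _ [q h]; exists (JGen x q).
  by apply: mp (ax (AxB5 _ _ _)) h; rewrite vempty_nil.
Qed.

Lemma mem_vnorm s z : (z \in vs (vnorm s)) = (z \in s).
Proof. by rewrite /= mem_sort mem_undup. Qed.

Lemma lift_X q f s : P (FJust q vempty f) -> P (FJust q (vnorm s) f).
Proof.
move=> h; elim: s => [|x s IH] //.
have [xs|xs] := boolP (x \in s).
  suff -> : vnorm (x :: s) = vnorm s by [].
  apply: vset_eq => z; rewrite !mem_vnorm in_cons.
  by case: eqP => // ->.
suff -> : vnorm (x :: s) = vadd x (vnorm s).
  apply: mp (ax (AxA3 _ _ _)) IH.
  by rewrite mem_vnorm.
by apply: vset_eq => z; rewrite /vadd !mem_vnorm !in_cons mem_vnorm.
Qed.

Lemma lift_any q f X : P (FJust q vempty f) -> P (FJust q X f).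
Proof. by move=> h; rewrite -(vnorm_vs X); apply: lift_X. Qed.

End S.

Theorem mainTheorem6 (CS : nat -> formula -> Prop) (y : nat) :
  const_spec CS -> axiomatically_appropriate CS ->
  forall (X : vset) (phi : formula) (t : jterm),
    y \notin vs X ->
    exists b : jterm, jsub t b /\
      prv CS (FImp (FAll y (FJust t (vadd y X) phi))
                   (FJust b X (FAll y phi))).
Proof.
move=> _ app X phi t hyX.
set Xy := vadd y X.
set T := FJust t Xy phi.
set A := FAll y T.
have hAT : prv CS (FImp A T).
  have := ax CS (AxInst (free_for_id y T)); by rewrite subst_id.
have [c' hc'] := lift_empty app (contra hAT).
set r := JApp c' (JQue t).
set R := FJust r X (FNeg A).
have h0 : prv CS (FImp (FNeg phi) (FNeg T)) := contra (ax CS (AxB1 t Xy phi)).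
have h1 : prv CS (FImp (FNeg T) (FJust (JQue t) Xy (FNeg T))) := ax CS (AxB6 _ _ _).
have h2 : prv CS (FImp (FJust (JQue t) Xy (FNeg T)) (FJust r Xy (FNeg A))).
  exact: mp (ax CS (AxB2 _ _ _ _ _)) (lift_any Xy hc').
have h3 : prv CS (FImp (FJust r Xy (FNeg A)) R).
  by apply: ax; apply: AxA2 => //=; rewrite eqxx.
have hnphiR : prv CS (FImp (FNeg phi) R).
  exact: imp_trans h0 (imp_trans h1 (imp_trans h2 h3)).
have hnR : prv CS (FImp (FNeg R) phi) := imp_trans (contra hnphiR) (ax CS (AxDN phi)).
have hPhi : prv CS (FImp (FNeg R) (FAll y phi)).
  apply: mp (PGen y hnR); apply: ax; apply: AxAllImp => /=.
  by rewrite orbF.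
have [q hq] := lift_empty app hPhi.
exists (JApp q (JQue r)); split.
  have htt : jsub t t by case: (t) => *; left.
  simpl; tauto.
have hAnR : prv CS (FImp A (FNeg R)) := imp_swap (ax CS (AxB1 r X (FNeg A))).
apply: imp_trans hAnR _.
apply: imp_trans (ax CS (AxB6 r X (FNeg A))) _.
exact: mp (ax CS (AxB2 _ _ _ _ _)) (lift_any X hq).
Qed.
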